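(* Assume all $\lambda_k>0$ and $\mu_k>0$, and let $\bar X=(\bar X_{i,k})$ have the stationary distribution of the two-layer loss system with parameters $(m,n,\lambda,\mu)$. Then for each class $k$: $\mathrm{Erl}(m_k,\lambda_k/\mu_k)\le_{\mathrm{st}}\bar X_{1,k}+\bar X_{2,k}\le_{\mathrm{st}}\mathrm{Erl}(m_k+n,\lambda_k/\mu_k)$. Consequently, with $a_k=\mathbb{E}(\bar X_{1,k}+\bar X_{2,k})$, $\theta_k=\mu_k a_k$ and $b_k=P(\bar X\in B_k)$: $a_{\mathrm{Erl}}(m_k,\lambda_k/\mu_k)\le a_k\le a_{\mathrm{Erl}}(m_k+n,\lambda_k/\mu_k)$, $\mu_k a_{\mathrm{Erl}}(m_k,\lambda_k/\mu_k)\le\theta_k\le\mu_k a_{\mathrm{Erl}}(m_k+n,\lambda_k/\mu_k)$, $b_{\mathrm{Erl}}(m_k+n,\lambda_k/\mu_k)\le b_k\le b_{\mathrm{Erl}}(m_k,\lambda_k/\mu_k)$.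
   Context: Two-layer loss system with parameters $(m,n,\lambda,\mu)$: Markov process on $S=\{x\in\mathbb{Z}_+^K\times\mathbb{Z}_+^K:x_{1,k}\le m_k\ \forall k,\ \sum_kx_{2,k}\le n\}$ ($x_{i,k}$ = number of class-$k$ customers at layer $i$) with transitions $x\mapsto x+e_{1,k}$ at rate $\lambda_k1(x_{1,k}<m_k)$, $x\mapsto x+e_{2,k}$ at rate $\lambda_k1(x_{1,k}=m_k,\sum_lx_{2,l}<n)$, $x\mapsto x-e_{i,k}$ at rate $\mu_kx_{i,k}$. $B_k=\{x\in S:x_{1,k}=m_k,\ \sum_lx_{2,l}=n\}$ is the set of states where class-$k$ arrivals are rejected, so $b_k$ is the class-$k$ blocking probability and $\theta_k$ the mean class-$k$ throughput (satisfying $\lambda_k(1-b_k)=\theta_k$). $\mathrm{Erl}(s,\rho)$ denotes a random variable on $\{0,\dots,s\}$ with $P(\mathrm{Erl}(s,\rho)=i)=\frac{\rho^i/i!}{\sum_{j=0}^s\rho^j/j!}$; $a_{\mathrm{Erl}}(s,\rho)$ is its mean and $b_{\mathrm{Erl}}(s,\rho)=P(\mathrm{Erl}(s,\rho)=s)$ (Erlang B formula). $\le_{\mathrm{st}}$ between real random variables is the usual stochastic order. *)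

(* Defs.v *)
From HB Require Import structures.
From mathcomp Require Import all_boot all_order all_algebra.
Set Implicit Arguments. Unset Strict Implicit. Unset Printing Implicit Defensive.
Import Order.TTheory GRing.Theory Num.Theory.

(* Uniform bound on every coordinate of a state of S: x_{1,k} <= m_k <= max m,
   x_{2,k} <= n. *)
Definition bnd (K : nat) (m : 'I_K -> nat) (n : nat) : nat :=
  (\max_(k < K) m k + n).+1.

(* Carrier type containing S; states are pairs (layer 1, layer 2). *)
Notation state K m n :=
  ({ffun 'I_K -> 'I_(bnd m n)} * {ffun 'I_K -> 'I_(bnd m n)})%type.

Section Model.
Variables (K : nat) (m : 'I_K -> nat) (n : nat).

Definition x1 (x : state K m n) (k : 'I_K) : nat := x.1 k.
Definition x2 (x : state K m n) (k : 'I_K) : nat := x.2 k.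
Definition tot2 (x : state K m n) : nat := \sum_(l < K) x2 x l.

Definition inS (x : state K m n) : bool :=
  [forall k, x1 x k <= m k] && (tot2 x <= n).

Definition is_up1 (k : 'I_K) (x y : state K m n) : bool :=
  [forall j, x1 y j == x1 x j + (j == k)] && [forall j, x2 y j == x2 x j].
Definition is_up2 (k : 'I_K) (x y : state K m n) : bool :=
  [forall j, x1 y j == x1 x j] && [forall j, x2 y j == x2 x j + (j == k)].
Definition is_dn1 (k : 'I_K) (x y : state K m n) : bool :=
  [forall j, x1 y j + (j == k) == x1 x j] && [forall j, x2 y j == x2 x j].
Definition is_dn2 (k : 'I_K) (x y : state K m n) : bool :=
  [forall j, x1 y j == x1 x j] && [forall j, x2 y j + (j == k) == x2 x j].

Variable R : realFieldType.
Local Open Scope ring_scope.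
Variables (lam mu : 'I_K -> R).

Definition rate (x y : state K m n) : R :=
  \sum_(k < K)
    (  lam k *+ [&& is_up1 k x y & (x1 x k < m k)%N]
     + lam k *+ [&& is_up2 k x y, x1 x k == m k & (tot2 x < n)%N]
     + mu k *+ (x1 x k * is_dn1 k x y)
     + mu k *+ (x2 x k * is_dn2 k x y)).

Definition is_stationary (pi : state K m n -> R) : Prop :=
  [/\ forall x, inS x -> 0 <= pi x,
      \sum_(x | inS x) pi x = 1
    & forall y, inS y ->
        \sum_(x | inS x) pi x * rate x y = pi y * \sum_(z | inS z) rate y z].

Definition sum_ccdf (pi : state K m n -> R) (k : 'I_K) (t : R) : R :=
  \sum_(x | inS x && (t < (x1 x k + x2 x k)%:R)) pi x.
Definition mean_sum (pi : state K m n -> R) (k : 'I_K) : R :=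
  \sum_(x | inS x) pi x * (x1 x k + x2 x k)%:R.
Definition block_prob (pi : state K m n -> R) (k : 'I_K) : R :=
  \sum_(x | inS x && (x1 x k == m k) && (tot2 x == n)) pi x.
End Model.

Section Erlang.
Variable R : realFieldType.
Local Open Scope ring_scope.

Definition erl_w (rho : R) (i : nat) : R := rho ^+ i / (i`!)%:R.
Definition erl_norm (s : nat) (rho : R) : R := \sum_(j < s.+1) erl_w rho j.
Definition erl_pmf (s : nat) (rho : R) (i : nat) : R :=
  if (i <= s)%N then erl_w rho i / erl_norm s rho else 0.
Definition erl_ccdf (s : nat) (rho : R) (t : R) : R :=
  \sum_(i < s.+1 | t < i%:R) erl_pmf s rho i.
Definition a_erl (s : nat) (rho : R) : R :=
  \sum_(i < s.+1) i%:R * erl_pmf s rho i.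
Definition b_erl (s : nat) (rho : R) : R := erl_pmf s rho s.

(* usual stochastic order, expressed on survival functions t |-> P(X > t) *)
Definition st_le (F G : R -> R) : Prop := forall t : R, F t <= G t.
End Erlang.

(* Main.v *)
Require Import Defs.
From HB Require Import structures.
From mathcomp Require Import all_boot all_order all_algebra.
Set Implicit Arguments. Unset Strict Implicit. Unset Printing Implicit Defensive.
Import Order.TTheory GRing.Theory Num.Theory.
Local Open Scope ring_scope.


Lemma lr_mono (R : realFieldType) (M : nat) (P Q g : nat -> R) :
  \sum_(i < M.+1) P i = 1 -> \sum_(i < M.+1) Q i = 1 ->
  (forall i j : 'I_M.+1, (i < j)%N -> P j * Q i <= P i * Q j) ->
  (forall i j : 'I_M.+1, (i <= j)%N -> g i <= g j) ->
  \sum_(i < M.+1) P i * g i <= \sum_(i < M.+1) Q i * g i.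
Proof.
move=> sP sQ hPQ hg.
pose D := \sum_(i < M.+1) \sum_(j < M.+1) P i * Q j * (g j - g i).
have eD : \sum_(i < M.+1) Q i * g i - \sum_(i < M.+1) P i * g i = D.
  rewrite /D -[X in X - _]mul1r -sP mulr_suml -sumrB; apply: eq_bigr => i _.
  rewrite mulr_sumr -[P i * g i]mulr1 -sQ mulr_sumr -sumrB; apply: eq_bigr => j _.
  by rewrite mulrBr !mulrA [P i * g i * Q j]mulrAC.
have eD2 : D = \sum_(i < M.+1) \sum_(j < M.+1) P j * Q i * (g i - g j).
  by rewrite /D exchange_big.
have h2 : 0 <= D + D.
  rewrite {2}eD2 -big_split /=; apply: sumr_ge0 => i _.
  rewrite -big_split /=; apply: sumr_ge0 => j _.
  have -> : P i * Q j * (g j - g i) + P j * Q i * (g i - g j)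
     = (P i * Q j - P j * Q i) * (g j - g i).
    by rewrite mulrBl -[g i - g j]opprB mulrN.
  case: (ltngtP i j) => hij.
  - apply: mulr_ge0; first by rewrite subr_ge0 hPQ.
    by rewrite subr_ge0 hg // ltnW.
  - apply: mulr_le0; first by rewrite subr_le0 hPQ.
    by rewrite subr_le0 hg // ltnW.
  - by rewrite hij subrr mul0r.
rewrite -subr_ge0 eD.
by rewrite -mulr2n pmulrn_lge0 in h2.
Qed.


Section Erl.
Variables (R : realFieldType) (rho : R).
Hypothesis rho_gt0 : 0 < rho.

Lemma erl_w_gt0 i : 0 < erl_w rho i.
Proof. by rewrite /erl_w divr_gt0 // ?exprn_gt0 // ltr0n fact_gt0. Qed.

Lemma erl_norm_gt0 s : 0 < erl_norm s rho.
Proof.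
rewrite /erl_norm big_ord_recl /= ltr_pwDl ?erl_w_gt0 //.
by apply: sumr_ge0 => i _; apply: ltW; apply: erl_w_gt0.
Qed.

Lemma erl_wS j : erl_w rho j.+1 * j.+1%:R = rho * erl_w rho j.
Proof.
rewrite /erl_w factS natrM invfM exprS -!mulrA; congr (_ * _).
by rewrite (mulrC ((j`!)%:R^-1)) mulKf // pnatr_eq0.
Qed.

Lemma pmfE s (i : 'I_s.+1) : erl_pmf s rho i = erl_w rho i / erl_norm s rho.
Proof. by rewrite /erl_pmf -ltnS ltn_ord. Qed.

Lemma erl_sum1 s : \sum_(i < s.+1) erl_pmf s rho i = 1.
Proof.
under eq_bigr => i _ do rewrite pmfE.
by rewrite -mulr_suml mulfV // gt_eqF // erl_norm_gt0.
Qed.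

Lemma erl_pmf_ge0 s i : 0 <= erl_pmf s rho i.
Proof.
rewrite /erl_pmf; case: ifP => // _.
by rewrite divr_ge0 // ltW ?erl_w_gt0 ?erl_norm_gt0.
Qed.

Lemma erl_widen s M (F : nat -> R) : (s <= M)%N ->
  \sum_(i < s.+1) erl_pmf s rho i * F i = \sum_(i < M.+1) erl_pmf s rho i * F i.
Proof.
move=> hs; rewrite (big_ord_widen M.+1 (fun i => erl_pmf s rho i * F i)) //.
rewrite big_mkcond /=; apply: eq_bigr => i _.
case: ifP => // h; by rewrite /erl_pmf ltnS in h *; rewrite h mul0r.
Qed.

Lemma a_erl_b s : a_erl s rho = rho * (1 - b_erl s rho).
Proof.
have hZ := erl_norm_gt0 s.
rewrite /a_erl /b_erl {2}/erl_pmf leqnn.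
under eq_bigr => i _ do rewrite pmfE mulrA.
rewrite -mulr_suml big_ord_recl /= mul0r add0r.
under eq_bigr => i _ do rewrite /bump /= add1n mulrC erl_wS.
rewrite -mulr_sumr -mulrA; congr (_ * _).
apply: (mulIf (lt0r_neq0 hZ)); rewrite mulrBl mul1r divfK ?(lt0r_neq0 hZ) //.
rewrite -mulrA mulVf ?(lt0r_neq0 hZ) // mulr1.
by rewrite /erl_norm big_ord_recr /= addrK.
Qed.
End Erl.

Lemma sum_ind (R : realFieldType) M (F : nat -> R) c : (c < M.+1)%N ->
  \sum_(i < M.+1) F i * (nat_of_ord i == c)%:R = F c.
Proof.
move=> hc; rewrite (bigD1 (Ordinal hc)) //= eqxx mulr1 big1 ?addr0 // => i hi.
have [e|e] := eqVneq (nat_of_ord i) c; last by rewrite mulr0.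
by move: hi; rewrite (_ : i = Ordinal hc) ?eqxx //; apply: val_inj.
Qed.

Section Seq.
Variables (R : realFieldType) (l u : R) (m0 M : nat) (p q : nat -> R).
Hypotheses (l_gt0 : 0 < l) (u_gt0 : 0 < u) (hmM : (m0 <= M)%N).
Hypothesis Hbal : forall h : nat -> R,
  l * \sum_(j < M.+1) (p j - q j) * (h j.+1 - h j)
  + u * \sum_(j < M.+1) p j * (j%:R * (h j.-1 - h j)) = 0.
Hypotheses (Hq0 : forall j, 0 <= q j) (Hqp : forall j, q j <= p j)
  (Hqm : forall j, (j < m0)%N -> q j = 0) (Hp1 : \sum_(j < M.+1) p j = 1).

Let rho := l / u.
Let w := erl_w rho.
Lemma rho_gt0 : 0 < rho. Proof. by rewrite divr_gt0. Qed.

Lemma cut j : (0 < j)%N -> (j <= M)%N ->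
  u * j%:R * p j = l * (p j.-1 - q j.-1).
Proof.
case: j => // j _ hj.
have := Hbal (fun i => (j < i)%N%:R).
have D1 : forall i : nat, (j < i.+1)%N%:R - (j < i)%N%:R = (i == j)%:R :> R.
  move=> i; rewrite ltnS leq_eqVlt eq_sym.
  by case e: (i == j) => /=; [rewrite (eqP e) ltnn subr0 | rewrite subrr].
have D2 : forall i : nat, i%:R * ((j < i.-1)%N%:R - (j < i)%N%:R)
    = - (j.+1%:R * (i == j.+1)%:R) :> R.
  case=> [|i] /=; first by rewrite mul0r mulr0 oppr0.
  rewrite -opprB D1 eqSS.
  have [->|e] := eqVneq i j; first by rewrite mulrN.
  by rewrite /= !mulr0n oppr0 !mulr0 oppr0.
under eq_bigr do rewrite D1.
under [X in _ + u * X]eq_bigr do rewrite D2 mulrN mulrA.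
rewrite (sum_ind (fun i => p i - q i)); last by rewrite ltnS ltnW.
rewrite sumrN.
rewrite (sum_ind (fun i => p i * j.+1%:R)) ?ltnS // mulrN => /eqP; rewrite addr_eq0 => /eqP ->.
by rewrite opprK [p _ * _]mulrC mulrA.
Qed.

Lemma thru : l * (1 - \sum_(j < M.+1) q j) = u * \sum_(j < M.+1) p j * j%:R.
Proof.
have := Hbal (fun i => i%:R).
under eq_bigr do rewrite -natrB // subSnn mulr1.
have D2 : forall i : nat, i%:R * (i.-1%:R - i%:R) = - i%:R :> R.
  by case=> [|i] /=; rewrite ?mul0r ?oppr0 // -{2}addn1 natrD opprD addrA subrr add0r mulrN1.
under [X in _ + u * X]eq_bigr do rewrite D2 mulrN.
rewrite sumrN sumrB Hp1 mulrN => /eqP; rewrite addr_eq0 => /eqP ->.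
by rewrite opprK.
Qed.

Lemma cons j : (0 < j)%N -> (j <= M)%N ->
  (u * j%:R) * (p j * w j.-1) = (u * j%:R) * (p j.-1 * w j) - l * q j.-1 * w j.-1.
Proof.
case: j => // j _ hj.
have e1 : u * j.+1%:R * (p j.+1 * w j) = l * (p j - q j) * w j.
  by rewrite mulrA (cut _ hj).
have e2 : u * j.+1%:R * (p j * w j.+1) = l * p j * w j.
  have -> : u * j.+1%:R * (p j * w j.+1) = u * p j * (w j.+1 * j.+1%:R).
    rewrite -(mulrA u) -(mulrA u); congr (u * _); by rewrite (mulrC (w j.+1)) mulrCA.
  rewrite erl_wS /rho mulrCA !mulrA divfK ?gt_eqF //.
by rewrite /= e1 e2 -mulrBl -mulrBr.
Qed.

Lemma p_ge0 j : 0 <= p j.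
Proof. exact: le_trans (Hq0 j) (Hqp j). Qed.

Lemma cons_le j : (0 < j)%N -> (j <= M)%N -> p j * w j.-1 <= p j.-1 * w j.
Proof.
move=> h0 hj; have hu : 0 < u * j%:R by rewrite mulr_gt0 // ltr0n.
rewrite -(ler_pM2l hu) (cons h0 hj) gerBl //; apply: mulr_ge0.
  by apply: mulr_ge0; [exact: ltW | exact: Hq0].
exact: ltW (erl_w_gt0 rho_gt0 _).
Qed.

Lemma cons_eq j : (0 < j)%N -> (j <= m0)%N -> p j * w j.-1 = p j.-1 * w j.
Proof.
move=> h0 hj; have hu : 0 < u * j%:R by rewrite mulr_gt0 // ltr0n.
apply: (mulfI (lt0r_neq0 hu)); rewrite (cons h0 (leq_trans hj hmM)).
by rewrite Hqm ?mulr0 ?mul0r ?subr0 // prednK.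
Qed.

Lemma lr_le i j : (i < j)%N -> (j <= M)%N -> p j * w i <= p i * w j.
Proof.
elim: j => // j IH hij hj.
rewrite ltnS leq_eqVlt in hij; case/orP: hij => [/eqP -> | hij].
  exact: (cons_le (j := j.+1)).
have h1 := IH hij (ltnW hj).
have h2 := cons_le (j := j.+1) isT hj; rewrite /= in h2.
have wj := erl_w_gt0 rho_gt0 j.
rewrite -(ler_pM2r wj).
apply: (le_trans (y := p j * w j.+1 * w i)).
  by rewrite mulrAC ler_pM2r // erl_w_gt0 // rho_gt0.
rewrite mulrAC [p i * _ * _]mulrAC ler_pM2r //; exact: erl_w_gt0 rho_gt0 _.
Qed.

Lemma lr_eq i j : (i < j)%N -> (j <= m0)%N -> p j * w i = p i * w j.
Proof.
elim: j => // j IH hij hj.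
rewrite ltnS leq_eqVlt in hij; case/orP: hij => [/eqP -> | hij].
  exact: (cons_eq (j := j.+1)).
have h1 := IH hij (ltnW hj).
have h2 := cons_eq (j := j.+1) isT hj; rewrite /= in h2.
have wj := erl_w_gt0 rho_gt0 j.
apply: (mulIf (lt0r_neq0 wj)).
by rewrite mulrAC h2 mulrAC h1 mulrAC.
Qed.

Lemma st_bounds (g : nat -> R) : (forall i j, (i <= j)%N -> g i <= g j) ->
  \sum_(i < m0.+1) erl_pmf m0 rho i * g i <= \sum_(i < M.+1) p i * g i
  <= \sum_(i < M.+1) erl_pmf M rho i * g i.
Proof.
move=> hg; have hg' : forall i j : 'I_M.+1, (i <= j)%N -> g i <= g j.
  by move=> i j; apply: hg.
have rg := rho_gt0.
apply/andP; split.
- rewrite (erl_widen rho g hmM); apply: lr_mono => //.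
  + transitivity (\sum_(i < M.+1) erl_pmf m0 rho i * (fun=> 1) i).
      by apply: eq_bigr => i _; rewrite mulr1.
    rewrite -(erl_widen rho (fun=> 1) hmM) /=.
    by under eq_bigr do rewrite mulr1; exact: erl_sum1.
  + move=> i j hij; case: (leqP j m0) => hj.
    * rewrite /erl_pmf hj (leq_trans (ltnW hij) hj).
      rewrite mulrAC [_ / _ * p j]mulrAC [erl_w rho j * _]mulrC [erl_w rho i * _]mulrC.
      by rewrite (lr_eq hij hj).
    * rewrite /erl_pmf leqNgt hj /= mul0r mulr_ge0 ?p_ge0 //; exact: erl_pmf_ge0.
- apply: lr_mono => //; first exact: erl_sum1.
  move=> i j hij; rewrite !pmfE (mulrA (p j)) (mulrA (p i)); apply: ler_wpM2r.
    by rewrite invr_ge0 ltW // erl_norm_gt0.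
  by apply: lr_le => //; rewrite -ltnS.
Qed.

Lemma mean_bounds :
  a_erl m0 rho <= \sum_(i < M.+1) p i * i%:R <= a_erl M rho.
Proof.
rewrite /a_erl; under eq_bigr do rewrite mulrC; under [X in _ <= _ <= X]eq_bigr do rewrite mulrC.
by apply: st_bounds => i j hij; rewrite ler_nat.
Qed.

Lemma b_erl_a s : b_erl s rho = 1 - a_erl s rho / rho.
Proof.
by rewrite a_erl_b ?rho_gt0 // mulrAC divff ?gt_eqF ?rho_gt0 // mul1r opprB addrC subrK.
Qed.

Lemma b_bounds :
  b_erl M rho <= \sum_(j < M.+1) q j <= b_erl m0 rho.
Proof.
have e : \sum_(j < M.+1) q j = 1 - (\sum_(i < M.+1) p i * i%:R) / rho.
  apply/eqP; rewrite eq_sym subr_eq addrC -subr_eq; apply/eqP.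
  apply: (mulfI (lt0r_neq0 l_gt0)); rewrite thru /rho invf_div mulrA mulrC.
  rewrite [l * _]mulrC -mulrA; congr (_ * _); by rewrite mulrCA divff ?gt_eqF // mulr1.
case/andP: mean_bounds => h1 h2.
have hr : 0 < rho^-1 by rewrite invr_gt0 rho_gt0.
rewrite e !b_erl_a !lerD2l !lerN2 !ler_pM2r //.
by rewrite h1 h2.
Qed.

End Seq.

Local Close Scope ring_scope.
Section States.
Variables (K : nat) (m : 'I_K -> nat) (n : nat) (k : 'I_K).
Local Notation S := (state K m n).

Definition Nk (x : S) : nat := x1 x k + x2 x k.
Definition blk (x : S) : bool := (x1 x k == m k) && (tot2 x == n).

Lemma x2_le_tot (x : S) j : (x2 x j <= tot2 x)%N.
Proof. by rewrite /tot2 (bigD1 j) //= leq_addr. Qed.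

Lemma m_lt_bnd j : (m j + n < bnd m n)%N.
Proof. by rewrite /bnd ltnS leq_add2r (leq_bigmax j). Qed.

Lemma Nk_le (x : S) : inS x -> (Nk x <= m k + n)%N.
Proof.
case/andP=> /forallP h1 h2; rewrite /Nk leq_add //.
exact: leq_trans (x2_le_tot x k) h2.
Qed.

Lemma Nk_up1 k' (x y : S) : is_up1 k' x y -> Nk y = Nk x + (k == k').
Proof.
case/andP=> /forallP h1 /forallP h2.
by rewrite /Nk (eqP (h1 k)) (eqP (h2 k)) addnAC.
Qed.
Lemma Nk_up2 k' (x y : S) : is_up2 k' x y -> Nk y = Nk x + (k == k').
Proof.
case/andP=> /forallP h1 /forallP h2.
by rewrite /Nk (eqP (h1 k)) (eqP (h2 k)) addnA.
Qed.
Lemma Nk_dn1 k' (x y : S) : is_dn1 k' x y -> Nk y + (k == k') = Nk x.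
Proof.
case/andP=> /forallP h1 /forallP h2.
by rewrite /Nk -(eqP (h1 k)) (eqP (h2 k)) addnAC.
Qed.
Lemma Nk_dn2 k' (x y : S) : is_dn2 k' x y -> Nk y + (k == k') = Nk x.
Proof.
case/andP=> /forallP h1 /forallP h2.
by rewrite /Nk -(eqP (h2 k)) (eqP (h1 k)) addnA.
Qed.

Definition up1 (x : S) : S :=
  ([ffun j => inord (x1 x j + (j == k))], x.2).
Definition up2 (x : S) : S :=
  (x.1, [ffun j => inord (x2 x j + (j == k))]).
Definition dn1 (x : S) : S :=
  ([ffun j => inord (x1 x j - (j == k))], x.2).
Definition dn2 (x : S) : S :=
  (x.1, [ffun j => inord (x2 x j - (j == k))]).

Lemma pair_eq (y z : S) :
  (forall j, x1 y j = x1 z j) -> (forall j, x2 y j = x2 z j) -> y = z.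
Proof.
case: y z => [y1 y2] [z1 z2] h1 h2.
congr pair; apply/ffunP => j; apply: val_inj; [exact: h1 | exact: h2].
Qed.

Lemma x1_lt (x : S) j : inS x -> (x1 x j <= m j)%N.
Proof. by case/andP=> /forallP h _. Qed.

Lemma up1_spec (x : S) : inS x -> (x1 x k < m k)%N ->
  [/\ inS (up1 x), is_up1 k x (up1 x) & forall y, is_up1 k x y -> y = up1 x].
Proof.
move=> hx hk.
have e1 : forall j, x1 (up1 x) j = x1 x j + (j == k).
  move=> j; rewrite /x1 /= ffunE inordK //.
  have hj := x1_lt j hx.
  case: eqP => [->|_]; first by rewrite addn1 (leq_trans _ (m_lt_bnd k)) // ltnS (leq_trans hk) // leq_addr.
  by rewrite addn0 (leq_trans _ (m_lt_bnd j)) // ltnS (leq_trans (x1_lt j hx)) // leq_addr.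
have e2 : forall j, x2 (up1 x) j = x2 x j by [].
split.
- case/andP: hx => /forallP h1 h2; apply/andP; split; last by rewrite /tot2; under eq_bigr do rewrite e2.
  apply/forallP => j; rewrite e1; case: eqP => [->|_]; first by rewrite addn1.
  by rewrite addn0.
- by apply/andP; split; apply/forallP => j; rewrite ?e1 ?e2.
- move=> y /andP [/forallP h1 /forallP h2]; apply: pair_eq => j.
  + by rewrite e1 (eqP (h1 j)).
  + by rewrite e2 (eqP (h2 j)).
Qed.

Lemma sum_eqk : (\sum_(l < K) (l == k) = 1)%N.
Proof. by rewrite (bigD1 k) //= eqxx big1 // => l /negbTE ->. Qed.

Lemma up2_spec (x : S) : inS x -> (tot2 x < n)%N ->
  [/\ inS (up2 x), is_up2 k x (up2 x) & forall y, is_up2 k x y -> y = up2 x].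
Proof.
move=> hx hk.
have e2 : forall j, x2 (up2 x) j = x2 x j + (j == k).
  move=> j; rewrite /x2 /= ffunE inordK //.
  have hj := x2_le_tot x j.
  apply: (leq_trans _ (m_lt_bnd j)); rewrite ltnS.
  case: eqP => [->|_]; last by rewrite addn0 (leq_trans hj) // (leq_trans (ltnW hk)) // leq_addl.
  by rewrite addn1 (leq_trans (leq_ltn_trans (x2_le_tot x k) hk) (leq_addl _ _)).
have e1 : forall j, x1 (up2 x) j = x1 x j by [].
have et : tot2 (up2 x) = (tot2 x + 1)%N.
  by rewrite /tot2; under eq_bigr do rewrite e2; rewrite big_split /= sum_eqk.
split.
- case/andP: hx => /forallP h1 h2; apply/andP; split; last by rewrite et addn1.
  by apply/forallP => j; rewrite e1.
- by apply/andP; split; apply/forallP => j; rewrite ?e1 ?e2.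
- move=> y /andP [/forallP h1 /forallP h2]; apply: pair_eq => j.
  + by rewrite e1 (eqP (h1 j)).
  + by rewrite e2 (eqP (h2 j)).
Qed.

Lemma dn1_spec (x : S) : inS x -> (0 < x1 x k)%N ->
  [/\ inS (dn1 x), is_dn1 k x (dn1 x) & forall y, is_dn1 k x y -> y = dn1 x].
Proof.
move=> hx hk.
have e1 : forall j, x1 (dn1 x) j = x1 x j - (j == k).
  move=> j; rewrite /x1 /= ffunE inordK //.
  apply: (leq_trans _ (m_lt_bnd j)); rewrite ltnS (leq_trans (leq_subr _ _)) //.
  by rewrite (leq_trans (x1_lt j hx)) // leq_addr.
have e2 : forall j, x2 (dn1 x) j = x2 x j by [].
have hle : forall j, ((j == k) <= x1 x j)%N.
  by move=> j; case: eqP => [->|] //.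
split.
- case/andP: hx => /forallP h1 h2; apply/andP; split; last by rewrite /tot2; under eq_bigr do rewrite e2.
  by apply/forallP => j; rewrite e1 (leq_trans (leq_subr _ _)).
- by apply/andP; split; apply/forallP => j; rewrite ?e1 ?e2 ?subnK.
- move=> y /andP [/forallP h1 /forallP h2]; apply: pair_eq => j.
  + by rewrite e1 -(eqP (h1 j)) addnK.
  + by rewrite e2 (eqP (h2 j)).
Qed.

Lemma dn2_spec (x : S) : inS x -> (0 < x2 x k)%N ->
  [/\ inS (dn2 x), is_dn2 k x (dn2 x) & forall y, is_dn2 k x y -> y = dn2 x].
Proof.
move=> hx hk.
have e2 : forall j, x2 (dn2 x) j = x2 x j - (j == k).
  move=> j; rewrite /x2 /= ffunE inordK //.
  apply: (leq_trans _ (m_lt_bnd j)); rewrite ltnS (leq_trans (leq_subr _ _)) //.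
  rewrite (leq_trans (x2_le_tot x j)) //; case/andP: hx => _ h2.
  by rewrite (leq_trans h2) // leq_addl.
have e1 : forall j, x1 (dn2 x) j = x1 x j by [].
have hle : forall j, ((j == k) <= x2 x j)%N.
  by move=> j; case: eqP => [->|] //.
split.
- case/andP: hx => /forallP h1 h2; apply/andP; split; first by apply/forallP => j; rewrite e1.
  apply: leq_trans h2; rewrite /tot2 leq_sum // => j _; by rewrite e2 leq_subr.
- by apply/andP; split; apply/forallP => j; rewrite ?e1 ?e2 ?subnK.
- move=> y /andP [/forallP h1 /forallP h2]; apply: pair_eq => j.
  + by rewrite e1 (eqP (h1 j)).
  + by rewrite e2 -(eqP (h2 j)) addnK.
Qed.

Lemma c12 (x : S) : inS x ->
  ((x1 x k < m k) + ((x1 x k == m k) && (tot2 x < n)) = ~~ blk x)%N.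
Proof.
case/andP => /forallP h1 h2; have := h1 k; rewrite /blk.
case e: (x1 x k == m k) => /= hle.
- by rewrite (eqP e) ltnn /= ltn_neqAle h2 andbT.
- by rewrite ltn_neqAle e hle.
Qed.

Local Open Scope ring_scope.
Variables (R : realFieldType) (lam mu : 'I_K -> R).

Lemma sum_one (T : finType) (P Q : pred T) (y0 : T) (F : T -> R) (c : R) :
  P y0 -> Q y0 -> (forall y, Q y -> y = y0) ->
  \sum_(y | P y) (c *+ Q y) * F y = c * F y0.
Proof.
move=> hP hQ hu; rewrite (bigD1 y0) //= hQ mulr1n big1 ?addr0 // => y /andP [_ hy].
case e: (Q y); last by rewrite mulr0n mul0r.
by move: hy; rewrite (hu _ e) eqxx.
Qed.

Lemma gen (x : S) (h : nat -> R) : inS x ->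
  \sum_(y | inS y) rate lam mu x y * (h (Nk y) - h (Nk x)) =
  lam k *+ (~~ blk x) * (h (Nk x).+1 - h (Nk x))
  + mu k *+ Nk x * (h (Nk x).-1 - h (Nk x)).
Proof.
move=> hx; rewrite /rate.
under eq_bigr => y _ do rewrite mulr_suml.
rewrite exchange_big (bigD1 k) //= [X in _ + X]big1 ?addr0; last first.
  move=> k' hk'; apply: big1 => y hy.
  have hkk : (k == k') = false by rewrite eq_sym; apply/negbTE.
  case: (boolP [|| is_up1 k' x y, is_up2 k' x y, is_dn1 k' x y | is_dn2 k' x y]) => H.
  - have eN : Nk y = Nk x.
      case/or4P: H => H.
      + by rewrite (Nk_up1 H) hkk addn0.
      + by rewrite (Nk_up2 H) hkk addn0.
      + by rewrite -(Nk_dn1 H) hkk addn0.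
      + by rewrite -(Nk_dn2 H) hkk addn0.
    by rewrite eN subrr mulr0.
  - move: H; rewrite !negb_or => /and4P [/negbTE -> /negbTE -> /negbTE -> /negbTE ->].
    by rewrite /= !muln0 !mulr0n !addr0 mul0r.
under eq_bigr do rewrite !mulrDl.
rewrite !big_split /=.
have S1 : \sum_(y | inS y) lam k *+ [&& is_up1 k x y & (x1 x k < m k)%N]
            * (h (Nk y) - h (Nk x))
          = lam k *+ (x1 x k < m k)%N * (h (Nk x).+1 - h (Nk x)).
  case: (boolP (x1 x k < m k)%N) => c.
  - under eq_bigr do rewrite andbT.
    case: (up1_spec hx c) => hin hup hu.
    by rewrite (sum_one _ _ hin hup hu) (Nk_up1 hup) eqxx addn1 mulr1n.
  - rewrite mulr0n mul0r big1 // => y _.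
    by rewrite andbF mulr0n mul0r.
have S2 : \sum_(y | inS y) lam k *+ [&& is_up2 k x y, x1 x k == m k & (tot2 x < n)%N]
            * (h (Nk y) - h (Nk x))
          = lam k *+ ((x1 x k == m k) && (tot2 x < n))%N * (h (Nk x).+1 - h (Nk x)).
  case: (boolP ((x1 x k == m k) && (tot2 x < n))%N) => c.
  - case/andP: (c) => c1 c2.
    under eq_bigr do rewrite andbT.
    case: (up2_spec hx c2) => hin hup hu.
    by rewrite (sum_one _ _ hin hup hu) (Nk_up2 hup) eqxx addn1 mulr1n.
  - rewrite mulr0n mul0r big1 // => y _.
    by rewrite andbF mulr0n mul0r.
have S3 : \sum_(y | inS y) mu k *+ (x1 x k * is_dn1 k x y)
            * (h (Nk y) - h (Nk x))
          = mu k *+ x1 x k * (h (Nk x).-1 - h (Nk x)).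
  under eq_bigr do rewrite mulrnA.
  have [c|c] := eqVneq (x1 x k) 0%N.
  - by rewrite c mulr0n mul0r big1 // => y _; rewrite mul0rn mul0r.
  - have c' : (0 < x1 x k)%N by rewrite lt0n.
    case: (dn1_spec hx c') => hin hup hu.
    by rewrite (sum_one _ _ hin hup hu) -(Nk_dn1 hup) eqxx addn1.
have S4 : \sum_(y | inS y) mu k *+ (x2 x k * is_dn2 k x y)
            * (h (Nk y) - h (Nk x))
          = mu k *+ x2 x k * (h (Nk x).-1 - h (Nk x)).
  under eq_bigr do rewrite mulrnA.
  have [c|c] := eqVneq (x2 x k) 0%N.
  - by rewrite c mulr0n mul0r big1 // => y _; rewrite mul0rn mul0r.
  - have c' : (0 < x2 x k)%N by rewrite lt0n.
    case: (dn2_spec hx c') => hin hup hu.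
    by rewrite (sum_one _ _ hin hup hu) -(Nk_dn2 hup) eqxx addn1.
by rewrite S1 S2 S3 S4 -!mulrDl -!mulrnDr c12 // -addrA -mulrDl -mulrnDr.
Qed.

Lemma bal_h (pi : S -> R) (h : nat -> R) : is_stationary lam mu pi ->
  \sum_(x | inS x) pi x * (lam k *+ (~~ blk x) * (h (Nk x).+1 - h (Nk x))
     + mu k *+ Nk x * (h (Nk x).-1 - h (Nk x))) = 0.
Proof.
case=> _ _ hb.
transitivity (\sum_(x | inS x) pi x *
   \sum_(y | inS y) rate lam mu x y * (h (Nk y) - h (Nk x))).
  by apply: eq_bigr => x hx; rewrite gen.
have e : forall x, pi x * \sum_(y | inS y) rate lam mu x y * (h (Nk y) - h (Nk x))
   = \sum_(y | inS y) pi x * rate lam mu x y * h (Nk y)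
     - pi x * (\sum_(y | inS y) rate lam mu x y) * h (Nk x).
  move=> x; rewrite mulr_sumr mulr_sumr mulr_suml -sumrB.
  by apply: eq_bigr => y _; rewrite mulrA mulrBr.
rewrite (eq_bigr _ (fun x _ => e x)) sumrB; apply/eqP; rewrite subr_eq0; apply/eqP.
rewrite exchange_big /=; apply: eq_bigr => y hy.
by rewrite -mulr_suml hb.
Qed.

Lemma part (w : S -> R) (F : nat -> R) :
  \sum_(x | inS x) w x * F (Nk x)
  = \sum_(j < (m k + n).+1) (\sum_(x | inS x && (Nk x == j)) w x) * F j.
Proof.
rewrite (partition_big (fun x => inord (Nk x) : 'I_(m k + n).+1) predT) //=.
apply: eq_bigr => j _; rewrite mulr_suml.
apply: eq_big => [x|x /andP [hx /eqP e]].
- case hx: (inS x) => //=; by rewrite -val_eqE /= inordK // ltnS Nk_le.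
- by rewrite -e inordK // ltnS Nk_le.
Qed.

End States.

Local Open Scope ring_scope.

Theorem theorem7 (R : realFieldType) (K : nat) (m : 'I_K -> nat) (n : nat)
    (lam mu : 'I_K -> R) (pi : state K m n -> R) :
  (forall k, 0 < lam k) -> (forall k, 0 < mu k) ->
  is_stationary lam mu pi ->
  forall k : 'I_K,
    let rho := lam k / mu k in
    [/\ st_le (erl_ccdf (m k) rho) (sum_ccdf pi k)
        /\ st_le (sum_ccdf pi k) (erl_ccdf (m k + n) rho),
        a_erl (m k) rho <= mean_sum pi k <= a_erl (m k + n) rho,
        mu k * a_erl (m k) rho <= mu k * mean_sum pi k
          <= mu k * a_erl (m k + n) rho
      & b_erl (m k + n) rho <= block_prob pi k <= b_erl (m k) rho].
Proof.
move=> hl hu hst k rho.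
have hst' := hst; case: hst' => hpi h1 _.
pose M := (m k + n)%N.
have hmM : (m k <= M)%N by rewrite leq_addr.
pose p j := \sum_(x | inS x && (Nk k x == j)) pi x.
pose q j := \sum_(x | inS x && (Nk k x == j)) pi x * (blk k x)%:R.
have Hbal : forall h : nat -> R,
  lam k * \sum_(j < M.+1) (p j - q j) * (h j.+1 - h j)
  + mu k * \sum_(j < M.+1) p j * (j%:R * (h j.-1 - h j)) = 0.
  move=> h; apply: (etrans _ (bal_h k h hst)).
  have e1 := part k (fun x => pi x - pi x * (blk k x)%:R) (fun j => h j.+1 - h j).
  have e2 := part k pi (fun j => j%:R * (h j.-1 - h j)).
  transitivity (lam k * \sum_(x | inS x) (pi x - pi x * (blk k x)%:R)
                   * (h (Nk k x).+1 - h (Nk k x))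
      + mu k * \sum_(x | inS x) pi x * ((Nk k x)%:R * (h (Nk k x).-1 - h (Nk k x)))).
    rewrite e1 e2; congr (_ * _ + _ * _); apply: eq_bigr => j _; by rewrite sumrB.
  rewrite !mulr_sumr -big_split; apply: eq_bigr => x _.
  rewrite -mulr_natr -[mu k *+ _]mulr_natr.
  case: (blk k x) => /=; rewrite ?mulr1 ?subrr ?mulr0 ?mul0r ?add0r ?subr0.
    by rewrite mulr0 add0r mulrCA !mulrA.
  by rewrite mulr1n [in RHS]mulrDr !mulrA [lam k * _]mulrC [mu k * _]mulrC.
have Hq0 : forall j, 0 <= q j.
  by move=> j; apply: sumr_ge0 => x /andP [hx _]; apply: mulr_ge0 => //; apply: hpi.
have Hqp : forall j, q j <= p j.
  move=> j; apply: ler_sum => x /andP [hx _].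
  by case: (blk k x); rewrite ?mulr1 // mulr0 hpi.
have Hqm : forall j, (j < m k)%N -> q j = 0.
  move=> j hj; apply: big1 => x /andP [hx /eqP e].
  case hb: (blk k x); last by rewrite mulr0.
  move: hb => /andP [/eqP e1 _].
  by move: hj; rewrite -e /Nk e1 ltnNge leq_addr.
have Hp1 : \sum_(j < M.+1) p j = 1.
  have := part k pi (fun=> 1); under eq_bigr do rewrite mulr1.
  by under [X in _ = X -> _]eq_bigr do rewrite mulr1; move=> <-.
have stb := @st_bounds R (lam k) (mu k) (m k) M p q (hl k) (hu k) hmM Hbal Hq0 Hqp Hqm Hp1.
have mb := @mean_bounds R (lam k) (mu k) (m k) M p q (hl k) (hu k) hmM Hbal Hq0 Hqp Hqm Hp1.
have bb := @b_bounds R (lam k) (mu k) (m k) M p q (hl k) (hu k) hmM Hbal Hq0 Hqp Hqm Hp1.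
have eccdf : forall t, sum_ccdf pi k t = \sum_(j < M.+1) p j * ((t < j%:R)%R)%:R.
  move=> t; rewrite /sum_ccdf big_mkcondr /= -(part k pi (fun j => ((t < j%:R)%R)%:R)).
  by apply: eq_bigr => x _; rewrite /Nk; case: ifP; rewrite ?mulr1 ?mulr0.
have ecc : forall s t, erl_ccdf s rho t
    = \sum_(i < s.+1) erl_pmf s rho i * ((t < i%:R)%R)%:R.
  move=> s t; rewrite /erl_ccdf big_mkcond /=.
  by apply: eq_bigr => i _; case: ifP; rewrite ?mulr1 ?mulr0.
have emean : mean_sum pi k = \sum_(j < M.+1) p j * j%:R.
  by rewrite /mean_sum -(part k pi (fun j => j%:R)).
have eblk : block_prob pi k = \sum_(j < M.+1) q j.
  rewrite /block_prob (eq_bigl (fun x => inS x && blk k x)); last first.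
    by move=> x; rewrite /blk andbA.
  rewrite big_mkcondr /=.
  transitivity (\sum_(x | inS x) pi x * (blk k x)%:R * (fun=> 1 : R) (Nk k x)).
    by apply: eq_bigr => x _; case: (blk k x); rewrite /= ?mulr1 ?mulr0.
  rewrite (part k (fun x => pi x * (blk k x)%:R) (fun=> 1)).
  by apply: eq_bigr => j _; rewrite mulr1.
have gmono : forall (t : R) (i j : nat), (i <= j)%N -> ((t < i%:R)%R)%:R <= ((t < j%:R)%R)%:R :> R.
  move=> t i j hij; case h: (t < i%:R); last by case: (t < j%:R).
  by rewrite (lt_le_trans h) // ler_nat.
have mono_nat : forall i j : nat, (i <= j)%N -> i%:R <= j%:R :> R.
  by move=> i j hij; rewrite ler_nat.
split.
- split => t; rewrite eccdf ecc.
  + by case/andP: (stb _ (gmono t)).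
  + by case/andP: (stb _ (gmono t)).
- by rewrite emean.
- by rewrite !ler_pM2l // emean.
- by rewrite eblk.
Qed.
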